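(* Let $n$ be a positive integer and $m=n+1$. Then for every zero-normalized $\Gamma_{m,n}$-semimodule $\Delta$, $G_n(\widehat{\Delta})=\big(G_n(\Delta)\big)^T$, where $T$ denotes transposition (conjugation) of Young diagrams.
   Context: Let $m,n$ be coprime positive integers and $\Gamma=\{am+bn:a,b\in\mathbb{Z}_{\ge0}\}$. A $\Gamma$-semimodule is $\Delta\subset\mathbb{Z}_{\ge0}$ with $\Delta+\Gamma\subset\Delta$; zero-normalized means $\min\Delta=0$. An $n$-generator of $\Delta$ is $a\in\Delta$ with $a-n\notin\Delta$; there are exactly $n$ of them, $b_1<\dots<b_n$. Put $g_n(x)=\#(([x,x+m)\cap\mathbb{Z})\setminus\Delta)$; then $g_n(b_1)\ge\dots\ge g_n(b_n)$ and $G_n(\Delta)$ is the Young diagram with these column heights. The dual semimodule is $\Delta^*=\{\varphi\in\mathbb{Z}:\varphi+\Delta\subset\Gamma\}$, and $\widehat\Delta=\Delta^*-\min\Delta^*$ (equivalently $\widehat\Delta=\max(\mathbb{Z}\setminus\Delta)-(\mathbb{Z}\setminus\Delta)$). *)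

(* Defs.v *)
From mathcomp Require Import all_boot.
From Stdlib Require Import ClassicalEpsilon.

Set Implicit Arguments.
Unset Strict Implicit.
Unset Printing Implicit Defensive.

(* Subsets of Z_{>=0} are represented as predicates on nat. *)

Definition inGamma (m n x : nat) : Prop := exists a b : nat, x = a * m + b * n.

Definition semimodule (m n : nat) (D : nat -> Prop) : Prop :=
  forall d x, D d -> inGamma m n x -> D (d + x).

(* zero-normalized: min Delta = 0 (Delta \subset Z_{>=0}, so this is 0 \in Delta) *)
Definition zero_normalized (D : nat -> Prop) : Prop := D 0.

Definition asb (P : Prop) : bool :=
  if excluded_middle_informative P then true else false.

(* a is an n-generator of Delta: a \in Delta and a - n \notin Delta
   (a - n < 0 is never in Delta \subset Z_{>=0}) *)
Definition is_ngen (n : nat) (D : nat -> Prop) (a : nat) : Prop :=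
  D a /\ ~ (n <= a /\ D (a - n)).

Definition ngens (n : nat) (D : nat -> Prop) : seq nat :=
  epsilon (inhabits [::])
    (fun s : seq nat => sorted ltn s /\ forall a, a \in s <-> is_ngen n D a).

Definition gn (m : nat) (D : nat -> Prop) (x : nat) : nat :=
  count (fun y => ~~ asb (D y)) (iota x m).

(* Young diagrams as sets of cells (i, j) (0-indexed: column i, row j). *)
Definition diagram := (nat * nat) -> Prop.

(* G_n(Delta): n columns, the i-th (0-indexed) of height g_n(b_{i+1}) *)
Definition Gn (m n : nat) (D : nat -> Prop) : diagram :=
  fun c => c.1 < n /\ c.2 < gn m D (nth 0 (ngens n D) c.1).

Definition transpose (Y : diagram) : diagram := fun c => Y (c.2, c.1).

(* dual semimodule Delta^* = { phi : phi + Delta \subset Gamma }.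
   Since 0 \in Delta and Gamma \subset Z_{>=0}, Delta^* \subset Z_{>=0},
   so phi ranges over nat without loss. *)
Definition dual (m n : nat) (D : nat -> Prop) (phi : nat) : Prop :=
  forall d, D d -> inGamma m n (phi + d).

Definition min_dual (m n : nat) (D : nat -> Prop) : nat :=
  epsilon (inhabits 0)
    (fun c => dual m n D c /\ forall y, dual m n D y -> c <= y).

Definition hat (m n : nat) (D : nat -> Prop) : nat -> Prop :=
  fun x => dual m n D (x + min_dual m n D).

(* Main.v *)
Require Import Defs.
From mathcomp Require Import all_boot zify.
From Stdlib Require Import ClassicalEpsilon Classical.
Set Implicit Arguments.
Unset Strict Implicit.

Lemma gammaP n q s : s < n -> (inGamma n.+1 n (q*n + s) <-> s <= q).
Proof.
move=> sn; split.
- case=> a [b E].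
  have n0 : 0 < n by lia.
  have h1 : (q*n+s) %% n = s by rewrite modnMDl modn_small.
  have h2 : (q*n+s) %/ n = q by rewrite divnMDl // divn_small // addn0.
  have e2 : a * n.+1 + b * n = (a+b+a%/n)*n + a%%n.
    have := divn_eq a n; nia.
  rewrite E e2 modnMDl modn_small ?ltn_pmod // in h1.
  rewrite E e2 divnMDl // (divn_small (ltn_pmod a n0)) addn0 in h2.
  rewrite -h1 -h2 -addnA; exact: leq_trans (leq_mod a n) (leq_addr _ _).
- move=> sq; exists s, (q - s); nia.
Qed.

Lemma gammaE n x : 0 < n -> (inGamma n.+1 n x <-> x %% n <= x %/ n).
Proof. move=> n0; rewrite {1}(divn_eq x n); apply: gammaP; exact: ltn_pmod. Qed.

Lemma gamma_big n x : 0 < n -> n * n.-1 <= x -> inGamma n.+1 n x.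
Proof.
move=> n0 h; apply/gammaE => //.
have h1 : n.-1 <= x %/ n.
  have := leq_div2r n h; rewrite mulKn //.
have := ltn_pmod x n0; lia.
Qed.

Lemma gamma_sym n x y : 0 < n -> x + y + 1 = n * n.-1 ->
  (inGamma n.+1 n x <-> ~ inGamma n.+1 n y).
Proof.
move=> n0 E.
rewrite (@gammaE n x n0) (@gammaE n y n0).
have := divn_eq x n; have := divn_eq y n; have := ltn_pmod x n0; have := ltn_pmod y n0.
set q := x %/ n; set s := x %% n; set q' := y %/ n; set s' := y %% n.
move=> h1 h2 ex ey.
have ht : n %| s + s' + 1.
  have : n %| (q + q') * n + (s + s' + 1).
    have -> : (q + q') * n + (s + s' + 1) = n * n.-1 by lia.
    exact: dvdn_mulr.
  by rewrite dvdn_addr // dvdn_mull.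
have ht2 : s + s' + 1 = n.
  case/dvdnP: ht => k hk.
  have : k = 1.
    case: k hk => [|[|k]] hk; nia.
  move=> k1; rewrite k1 mul1n in hk; done.
have hq : q + q' + 2 = n.
  have : (q + q' + 1) * n = n.-1 * n by nia.
  move/eqP; rewrite eqn_pmul2r // => /eqP; lia.
split=> H; lia.
Qed.

Definition closedn (n : nat) (P : nat -> Prop) := forall x, P x -> P (x + n).
Definition evtl (P : nat -> Prop) := exists K, forall x, K <= x -> P x.

Lemma asbP (P : Prop) : asb P <-> P.
Proof. rewrite /asb; case: excluded_middle_informative => //. Qed.

Lemma closeK n P x k : closedn n P -> P x -> P (x + k * n).
Proof. move=> hc; elim: k => [|k IH] hx; first by rewrite addn0.
by rewrite mulSnr addnA; apply: hc; apply: IH. Qed.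

Lemma mod_step n P x y : closedn n P -> P x -> x <= y -> x %% n = y %% n -> P y.
Proof.
move=> hc hx xy e.
have : n %| y - x by rewrite -eqn_mod_dvd // e.
case/dvdnP=> k hk; have -> : y = x + k * n by lia.
exact: closeK.
Qed.

Lemma mod_gap n x y : 0 < n -> x %% n = y %% n -> x < y -> x + n <= y.
Proof.
move=> n0 e xy.
have : n %| y - x by rewrite -eqn_mod_dvd ?(ltnW xy) // e.
move/dvdn_leq; have : 0 < y - x by lia.
move=> h /(_ h); lia.
Qed.

Lemma mod_subn n a : n <= a -> (a - n) %% n = a %% n.
Proof. move=> h; by rewrite -{2}(subnK h) modnDr. Qed.

Definition gen (n : nat) (P : nat -> Prop) (r : nat) : nat :=
  epsilon (inhabits 0) (fun x => P x /\ x %% n = r /\ forall y, P y -> y %% n = r -> x <= y).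

Lemma gen_spec n P r : 0 < n -> evtl P -> r < n ->
  P (gen n P r) /\ gen n P r %% n = r /\ forall y, P y -> y %% n = r -> gen n P r <= y.
Proof.
move=> n0 [K hK] rn; rewrite /gen.
apply: (epsilon_spec (inhabits 0) (fun x => P x /\ x %% n = r /\ forall y, P y -> y %% n = r -> x <= y)).
have ex : exists x, asb (P x) && (x %% n == r).
  exists (K * n + r); apply/andP; split; first by apply/asbP; apply: hK; nia.
  by rewrite modnMDl modn_small.
case: (ex_minnP ex) => x /andP [/asbP px /eqP xr] hmin.
exists x; split=> //; split=> // y py yr; apply: hmin; apply/andP; split; [exact/asbP | exact/eqP].
Qed.

Lemma ngen_char n P a : 0 < n -> closedn n P -> evtl P ->
  (is_ngen n P a <-> a = gen n P (a %% n)).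
Proof.
move=> n0 hc he; have [g1 [g2 g3]] := gen_spec n0 he (ltn_pmod a n0).
split.
- case=> pa hna; apply/eqP; rewrite eqn_leq g3 // andbT; rewrite leqNgt; apply/negP => lt.
  have h := mod_gap n0 g2 lt.
  apply: hna; split; first by lia.
  apply: (mod_step hc g1); first by lia.
  by rewrite g2 mod_subn //; lia.
- move=> ea; split; first by rewrite ea.
  case=> na pan; have := g3 _ pan (mod_subn na); rewrite -ea; lia.
Qed.

Lemma ngens_spec n P : 0 < n -> closedn n P -> evtl P ->
  sorted ltn (ngens n P) /\ forall a, a \in ngens n P <-> is_ngen n P a.
Proof.
move=> n0 hc [K hK]; rewrite /ngens.
apply: (epsilon_spec (inhabits [::]) (fun s : seq nat => sorted ltn s /\ forall a, a \in s <-> is_ngen n P a)).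
exists [seq x <- iota 0 (K + n) | asb (is_ngen n P x)]; split.
  by apply: sorted_filter; [exact: ltn_trans | exact: iota_ltn_sorted].
move=> a; rewrite mem_filter mem_iota add0n; split.
  by case/andP=> /asbP.
move=> h; apply/andP; split; first exact/asbP.
rewrite leq0n /= ltnNge; apply/negP => big.
case: h => _ []; split; first by lia.
apply: hK; lia.
Qed.

Lemma perm_ngens n P : 0 < n -> closedn n P -> evtl P ->
  perm_eq (ngens n P) (map (gen n P) (iota 0 n)).
Proof.
move=> n0 hc he; have [so mem] := ngens_spec n0 hc he.
apply: uniq_perm.
- exact: sorted_uniq ltn_trans ltnn _ so.
- rewrite map_inj_in_uniq ?iota_uniq // => x y.
  rewrite !mem_iota !add0n /= => xn yn e.
  have [_ [ex _]] := gen_spec n0 he xn; have [_ [ey _]] := gen_spec n0 he yn.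
  by rewrite -ex -ey e.
- move=> a; apply/idP/mapP.
  + move/mem/(ngen_char _ n0 hc he) => ea; exists (a %% n) => //.
    by rewrite mem_iota add0n ltn_pmod.
  + case=> r; rewrite mem_iota add0n /= => rn ->.
    apply/mem/(ngen_char _ n0 hc he).
    have [_ [er _]] := gen_spec n0 he rn; by rewrite er.
Qed.

Lemma size_ngens n P : 0 < n -> closedn n P -> evtl P -> size (ngens n P) = n.
Proof. move=> n0 hc he; by rewrite (perm_size (perm_ngens n0 hc he)) size_map size_iota. Qed.

Lemma perm_mod_iota n b : 0 < n -> perm_eq (map (fun y => y %% n) (iota b n)) (iota 0 n).
Proof.
move=> n0.
have u : uniq (map (fun y => y %% n) (iota b n)).
  rewrite map_inj_in_uniq ?iota_uniq // => x y; rewrite !mem_iota => /andP[x1 x2] /andP[y1 y2] e.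
  case: (ltngtP x y) => // h.
  - have := mod_gap n0 e h; lia.
  - have := mod_gap n0 (esym e) h; lia.
have sub : {subset map (fun y => y %% n) (iota b n) <= iota 0 n}.
  move=> r /mapP [y _ ->]; by rewrite mem_iota add0n ltn_pmod.
have [|_ eq] := uniq_min_size u sub; first by rewrite size_map !size_iota.
apply: uniq_perm => //; exact: iota_uniq.
Qed.

Lemma gn_formula n P b : 0 < n -> closedn n P -> evtl P -> P b ->
  gn n.+1 P b = count (fun g => b + n < g) (ngens n P).
Proof.
move=> n0 hc he pb.
rewrite /gn -addn1 iotaD count_cat /= addn0.
have -> : asb (P (b + n)) = true by apply/asbP; exact: hc.
rewrite addn0.
rewrite (permP (perm_ngens n0 hc he)) count_map.
rewrite -(permP (perm_mod_iota b n0)) count_map.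
apply: eq_in_count => y; rewrite mem_iota => /andP [y1 y2] /=.
have yn := ltn_pmod y n0.
have [g1 [g2 g3]] := gen_spec n0 he yn.
case: (boolP (asb (P y))) => [/asbP py | /negP npy] /=.
  by have := g3 _ py erefl; rewrite ltnNge => h; apply/esym/negbTE; rewrite negbK; lia.
apply/esym; case: (leqP (gen n P (y %% n)) y) => gy.
  by exfalso; apply: npy; apply/asbP; exact: (mod_step hc g1 gy).
have h := mod_gap n0 (esym g2) gy.
rewrite ltn_neqAle; apply/andP; split; last by lia.
apply/eqP => e; apply: npy; apply/asbP.
have ey : y %% n = b %% n by rewrite -g2 -e modnDr.
case: (ltngtP b y) => hb; last by rewrite -hb.
  by have := mod_gap n0 (esym ey) hb; lia.
lia.
Qed.

Lemma refl_gen n P Q E : 0 < n -> (forall x, Q x <-> ~ (x < E /\ P (E - 1 - x))) ->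
  (forall x, E <= x -> P x) ->
  forall a, is_ngen n Q a <-> (a <= E + n - 1 /\ is_ngen n P (E + n - 1 - a)).
Proof.
move=> n0 hQ hP a; split.
- case=> qa hna.
  have aC : a <= E + n - 1.
    rewrite leqNgt; apply/negP => big; apply: hna; split; first by lia.
    apply/hQ; case=> h _; lia.
  split=> //; split.
    case: (leqP n a) => na; last by apply: hP; lia.
    have : ~ Q (a - n) by move=> h; apply: hna.
    move/hQ/NNPP => [h1 h2].
    by have -> : E + n - 1 - a = E - 1 - (a - n) by lia.
  move=> [h1 h2]; move/hQ: qa; apply; split; first by lia.
  by have -> : E - 1 - a = E + n - 1 - a - n by lia.
- case=> aC [pg hng]; split.
    apply/hQ; move=> [h1 h2]; apply: hng; split; first by lia.
    by have -> : E + n - 1 - a - n = E - 1 - a by lia.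
  move=> [na]; apply/hQ; apply; split; first by lia.
  by have -> : E - 1 - (a - n) = E + n - 1 - a by lia.
Qed.

Lemma gen_le n P E g : (forall x, E <= x -> P x) -> is_ngen n P g -> g <= E + n - 1.
Proof.
move=> hP [_ h]; rewrite leqNgt; apply/negP => big; apply: h; split; first by lia.
apply: hP; lia.
Qed.

Lemma refl_closed n P Q E : closedn n P -> (forall x, Q x <-> ~ (x < E /\ P (E - 1 - x))) ->
  closedn n Q.
Proof.
move=> hc hQ x /hQ qx; apply/hQ; move=> [h1 h2]; apply: qx; split; first by lia.
have := hc _ h2; by have -> : E - 1 - (x + n) + n = E - 1 - x by lia.
Qed.

Lemma refl_evtl P Q E : (forall x, Q x <-> ~ (x < E /\ P (E - 1 - x))) -> evtl Q.
Proof. move=> hQ; exists E => x h; apply/hQ; move=> [h1 _]; lia. Qed.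

Lemma refl_ngens n P Q E : 0 < n -> closedn n P -> evtl P ->
  (forall x, Q x <-> ~ (x < E /\ P (E - 1 - x))) -> (forall x, E <= x -> P x) ->
  ngens n Q = rev (map (fun g => E + n - 1 - g) (ngens n P)).
Proof.
move=> n0 hc he hQ hP.
have [soQ memQ] := ngens_spec n0 (refl_closed hc hQ) (refl_evtl hQ).
have [soP memP] := ngens_spec n0 hc he.
apply: (irr_sorted_eq ltn_trans ltnn) => //.
  rewrite rev_sorted; apply: (@homo_sorted_in _ _ (fun g => g <= E + n - 1) _ ltn _ _ _ _ soP).
  - move=> x y hx hy /= xy; move: hx hy; rewrite /in_mem /=; lia.
  - by apply/allP => g /memP /(gen_le hP).
move=> a; rewrite mem_rev; apply/idP/mapP.
- move/memQ/(refl_gen n0 hQ hP) => [aC ga]; exists (E + n - 1 - a); first exact/memP.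
  lia.
- case=> g /memP gg ->; apply/memQ/(refl_gen n0 hQ hP).
  have := gen_le hP gg => gC; split; first by lia.
  by have -> : E + n - 1 - (E + n - 1 - g) = g by lia.
Qed.

Lemma count_sorted (r : rel nat) (P : pred nat) s j : transitive r -> sorted r s ->
  (forall a b, r a b -> P b -> P a) ->
  (j < count P s) = (j < size s) && P (nth 0 s j).
Proof.
move=> tr; elim: s j => [|a s IH] j //= so hP.
have sos := path_sorted so; have mn := order_path_min tr so.
case: (boolP (P a)) => pa.
  case: j => [|j] /=; first by rewrite pa.
  by rewrite add1n ltnS IH.
have c0 : count P s = 0.
  apply/eqP; rewrite -leqn0 leqNgt -has_count; apply/hasP => [[b bs pb]].
  by move/allP: mn => /(_ _ bs) rab; move/negP: pa; apply; apply: hP rab pb.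
rewrite add0n c0; case: j => [|j] /=; first by rewrite ?(negbTE pa) ?andbF.
case: (ltnP j (size s)) => js; last by rewrite ltnS (_ : (j < size s) = false) //; apply/negbTE; rewrite -leqNgt.
apply/esym/negbTE/negP => pj.
move/allP: mn => /(_ _ (mem_nth 0 js)) rab; case/andP: pj => _ /(hP _ _ rab).
by move/negP: pa.
Qed.

Lemma dual_char n D phi : 0 < n -> semimodule n.+1 n D ->
  (dual n.+1 n D phi <-> ~ (phi < n * n.-1 /\ D (n * n.-1 - 1 - phi))).
Proof.
move=> n0 hs; split.
- move=> hd [h1 h2]; have := hd _ h2.
  have -> : phi + (n * n.-1 - 1 - phi) = n * n.-1 - 1 by lia.
  have := @gamma_sym n 0 (n * n.-1 - 1) n0; rewrite add0n => hsym.
  have g0 : inGamma n.+1 n 0 by exists 0, 0.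
  by apply: (proj1 (hsym _) g0); lia.
- move=> h d hd; case: (leqP (n * n.-1) (phi + d)) => hc; first exact: gamma_big.
  apply: NNPP => ng.
  have E : (n * n.-1 - 1 - (phi + d)) + (phi + d) + 1 = n * n.-1 by lia.
  have hdy := hs _ _ hd (proj2 (@gamma_sym n _ _ n0 E) ng). apply: h; split; first by lia.
  by have -> : n * n.-1 - 1 - phi = d + (n * n.-1 - 1 - (phi + d)) by lia.
Qed.

Lemma min_dual_spec n D : 0 < n -> semimodule n.+1 n D ->
  dual n.+1 n D (min_dual n.+1 n D) /\ forall y, dual n.+1 n D y -> min_dual n.+1 n D <= y.
Proof.
move=> n0 hs; rewrite /min_dual.
apply: (epsilon_spec (inhabits 0) (fun c => dual n.+1 n D c /\ forall y, dual n.+1 n D y -> c <= y)).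
have ex : exists x, asb (dual n.+1 n D x).
  exists (n * n.-1); apply/asbP/(dual_char _ n0 hs); case; by rewrite ltnn.
case: (ex_minnP ex) => x /asbP hx hmin; exists x; split=> // y hy; apply: hmin; exact/asbP.
Qed.

Lemma count_rsorted s y i : sorted ltn s ->
  (i < count (fun g => y < g) s) = (i < size s) && (y < nth 0 s (size s - i.+1)).
Proof.
move=> so; rewrite -count_rev (@count_sorted (fun a b => b < a)).
- rewrite size_rev; case: (ltnP i (size s)) => //= h; by rewrite nth_rev.
- move=> a b c /= h1 h2; exact: ltn_trans h2 h1.
- by rewrite rev_sorted.
- move=> a b /= h1 h2; exact: ltn_trans h2 h1.
Qed.

Lemma arith1 (n b C g : nat) : g <= C -> b <= C -> (C - b + n < C - g) = (g + n < b).
Proof. move=> h1 h2; apply/idP/idP => h; lia. Qed.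

Theorem mainTheorem8 (n : nat) (D : nat -> Prop) :
  0 < n ->
  semimodule n.+1 n D ->
  zero_normalized D ->
  forall c : nat * nat,
    Gn n.+1 n (hat n.+1 n D) c <-> transpose (Gn n.+1 n D) c.
Proof.
move=> n0 hs hz [i j]; rewrite /Gn /transpose /=.
have [dm mm] := min_dual_spec n0 hs.
set mu := min_dual n.+1 n D in dm mm.
set E := n * n.-1 - mu.
have muc : mu <= n * n.-1.
  apply: mm; apply/(dual_char _ n0 hs); case; by rewrite ltnn.
have hQ : forall x, hat n.+1 n D x <-> ~ (x < E /\ D (E - 1 - x)).
  move=> x; rewrite /hat (dual_char _ n0 hs).
  have -> : n * n.-1 - 1 - (x + min_dual n.+1 n D) = E - 1 - x by rewrite /E /mu; lia.
  split=> h [h1 h2]; apply: h; split=> //; rewrite /E /mu in h1 *; lia.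
have hP : forall x, E <= x -> D x.
  move=> x hx; case: (leqP (n * n.-1) x) => hxc.
    by have := hs 0 x hz (gamma_big n0 hxc); rewrite add0n.
  have : ~ dual n.+1 n D (n * n.-1 - 1 - x).
    move/mm; rewrite /E in hx; lia.
  rewrite (dual_char _ n0 hs) => /NNPP [_].
  by have -> : n * n.-1 - 1 - (n * n.-1 - 1 - x) = x by lia.
clearbody E.
have hc : closedn n D by move=> x hx; apply: hs hx _; exists 0, 1; lia.
have he : evtl D.
  exists (n * n.-1) => x hx; by have := hs 0 x hz (gamma_big n0 hx); rewrite add0n.
have ngQ := refl_ngens n0 hc he hQ hP.
have hcQ := refl_closed hc hQ; have heQ := refl_evtl hQ.
have [so mem] := ngens_spec n0 hc he.
have [soQ memQ] := ngens_spec n0 hcQ heQ.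
have sz := size_ngens n0 hc he; have szQ := size_ngens n0 hcQ heQ.
set s := ngens n D in so mem sz ngQ *.
have sC : forall g, g \in s -> g <= E + n - 1.
  by move=> g /mem; apply: gen_le.
pose K := [&& i < n, j < n & nth 0 s j + n < nth 0 s (n - i.+1)].
have L : (i < n /\ j < gn n.+1 (hat n.+1 n D) (nth 0 (ngens n (hat n.+1 n D)) i)) <-> K.
  case: (ltnP i n) => hi; last by rewrite /K (ltnNge i n) hi; split=> //; case.
  have hq : hat n.+1 n D (nth 0 (ngens n (hat n.+1 n D)) i).
    have hiQ : i < size (ngens n (hat n.+1 n D)) by rewrite szQ.
    by have [] := proj1 (memQ _) (mem_nth 0 hiQ).
  rewrite (gn_formula n0 hcQ heQ hq) ngQ count_rev count_map.
  have hb : n - i.+1 < size s by rewrite sz; lia.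
  rewrite nth_rev ?size_map ?sz // (nth_map 0); last by rewrite sz; lia.
  have bC := sC _ (mem_nth 0 hb).
  rewrite (@eq_in_count _ _ (fun g => g + n < nth 0 s (n - i.+1))); last first.
    move=> g /sC gC; rewrite /preim /=; exact: arith1.
  rewrite (@count_sorted ltn); [| exact: ltn_trans | done | by move=> a b /= ab; lia].
  rewrite /K sz hi /=; split; [by case | by move=> h; split].
have R : (j < n /\ i < gn n.+1 D (nth 0 s j)) <-> K.
  case: (ltnP j n) => hj; last by rewrite /K (ltnNge j n) hj andbF; split=> //; case.
  have hjs : j < size s by rewrite sz.
  have hd : D (nth 0 s j) by have [] := proj1 (mem _) (mem_nth 0 hjs).
  rewrite (gn_formula n0 hc he hd) count_rsorted // sz /K hj /=.
  split; [by case | by move=> h; split].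
exact: (iff_trans L (iff_sym R)).
Qed.
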